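(* Let $r_1,r_2:\mathcal{X}\times\mathcal{Y}\to\mathbb{R}$ satisfy $\|r_1\|_\infty\le C$ and $\|r_2\|_\infty\le C$. For $x\in\mathcal{X}$ and $y_1,y_2\in\mathcal{Y}$ let $\delta_x(r_1,r_2,y_1,y_2)=r_1(x,y_1)-r_1(x,y_2)-(r_2(x,y_1)-r_2(x,y_2))$. Then $$\delta_x(r_1,r_2,y_1,y_2)^2\le 2(3+\exp(2C))^2\,D_{\mathrm H}^2\big(\mathbb{P}_{r_1}(\cdot|x,y_1,y_2)\,\|\,\mathbb{P}_{r_2}(\cdot|x,y_1,y_2)\big).$$
   Context: For a reward $r$, $\mathbb{P}_r(\cdot|x,y_1,y_2)$ is the Bernoulli distribution of the outcome of comparing $(x,y_1)$ and $(x,y_2)$ under the Bradley–Terry model, with $\mathbb{P}_r(y_1\succ y_2|x)=\sigma(r(x,y_1)-r(x,y_2))$ and $\sigma$ the logistic function. The squared Hellinger distance between distributions $P,Q$ on a finite set is $D_{\mathrm H}^2(P\|Q)=\frac12\sum_\omega(\sqrt{P(\omega)}-\sqrt{Q(\omega)})^2$. *)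

(* Defs.v *)
From Stdlib Require Import Reals.
Open Scope R_scope.

Definition sigma (t : R) : R := 1 / (1 + exp (- t)).

(* Bradley--Terry comparison distribution P_r(. | x, y1, y2) on the two
   outcomes: true = "y1 preferred to y2", false = "y2 preferred to y1". *)
Definition bt_dist {X Y : Type} (r : X -> Y -> R) (x : X) (y1 y2 : Y)
  : bool -> R :=
  fun b => if b then sigma (r x y1 - r x y2) else 1 - sigma (r x y1 - r x y2).

Definition hellinger2 (P Q : bool -> R) : R :=
  / 2 * ((sqrt (P true) - sqrt (Q true)) ^ 2
         + (sqrt (P false) - sqrt (Q false)) ^ 2).

Definition delta {X Y : Type} (r1 r2 : X -> Y -> R) (x : X) (y1 y2 : Y) : R :=
  r1 x y1 - r1 x y2 - (r2 x y1 - r2 x y2).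

(* Main.v *)
From Stdlib Require Import Reals Lra Psatz.
Open Scope R_scope.
Lemma alg (s1 s2 t1 t2 : R) : 0 <= s1 -> 0 <= s2 -> 0 <= t1 -> 0 <= t2 ->
  s1*s1 + t1*t1 = 1 -> s2*s2+t2*t2 = 1 ->
  (s1*s1 - s2*s2)^2 <= (s1-s2)^2 + (t1-t2)^2.
Proof. intros.
set (X := (s1-s2)^2). set (Y := (t1-t2)^2). set (A := (s1+s2)^2). set (B := (t1+t2)^2).
assert (HP1 : (s1*s1 - s2*s2)^2 = X*A) by (unfold X, A; ring).
assert (HP2 : (s1*s1 - s2*s2)^2 = Y*B) by (unfold Y, B; replace (s1*s1 - s2*s2) with (t2*t2-t1*t1) by lra; ring).
assert (X0 : 0 <= X) by (apply pow2_ge_0). assert (Y0 : 0 <= Y) by (apply pow2_ge_0).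
assert (HAB : A + B <= 4) by (assert (A+B+X+Y = 4) by (unfold A,B,X,Y; nra); lra).
assert (A0 : 0 <= A) by (apply pow2_ge_0). assert (B0 : 0 <= B) by (apply pow2_ge_0).
assert (E : (s1*s1 - s2*s2)^2 * (A+B) = A*B*(X+Y)) by (rewrite Rmult_plus_distr_l; rewrite HP2 at 1; rewrite HP1; ring).
assert (AB : A*B <= A+B) by (assert (0 <= (A-B)^2) by apply pow2_ge_0; assert (0 <= (A+B)*(4-(A+B))) by (apply Rmult_le_pos; lra); nra).
destruct (Req_dec (A+B) 0).
- assert (A = 0) by lra. rewrite HP1. nra.
- assert (0 < A+B) by lra.
  apply Rmult_le_reg_r with (A+B); auto. rewrite E. nra.
Qed.
Require Import Defs.
From Coquelicot Require Import Coquelicot.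

Lemma exp_le x y : x <= y -> exp x <= exp y.
Proof. intro H. destruct (Rle_lt_or_eq_dec _ _ H).
- left; apply exp_increasing; auto.
- subst; right; reflexivity. Qed.

Lemma sigma_mvt (M a b : R) : 0 <= M -> Rabs a <= M -> Rabs b <= M ->
  Rabs (a - b) <= (3 + exp M) * Rabs (sigma a - sigma b).
Proof.
intros HM Ha Hb.
set (df := fun t => exp (- t) / (1 + exp (- t))^2).
assert (Hd : forall t, is_derive sigma t (df t)).
{ intro t. unfold sigma, df. auto_derive.
  - pose proof (exp_pos (-t)). lra.
  - pose proof (exp_pos (-t)). field. lra. }
destruct (MVT_gen sigma a b df) as [c [Hc Heq]].
- intros; apply Hd.
- intros. apply continuity_pt_filterlim. exact (ex_derive_continuous sigma x (ex_intro _ _ (Hd x))).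
- assert (Hc2 : Rabs c <= M).
  { apply Rabs_le. destruct Hc as [Hc1 Hc2].
    apply Rabs_le_between in Ha. apply Rabs_le_between in Hb.
    unfold Rmin in Hc1; unfold Rmax in Hc2; destruct (Rle_dec a b); lra. }
  apply Rabs_le_between in Hc2.
  set (w := exp (- c)). set (E := exp M).
  assert (Hw0 : 0 < w) by apply exp_pos.
  assert (HwE : w <= E) by (unfold w, E; apply exp_le; lra).
  assert (HwE' : exp (-M) <= w) by (unfold w; apply exp_le; lra).
  assert (HEi : exp (-M) * E = 1) by (unfold E; rewrite <- exp_plus; replace (-M+M) with 0 by ring; apply exp_0).
  assert (HE1 : 1 <= E) by (unfold E; rewrite <- exp_0; apply exp_le; lra).
  assert (Hkey : (1 + w)^2 <= (3 + E) * w).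
  { assert (0 <= (E - w) * (w - exp (-M))) by (apply Rmult_le_pos; lra).
    assert (0 <= E*((E - w) * (w - exp (-M)))) by (apply Rmult_le_pos; lra).
    assert (0 <= exp (-M)) by (left; apply exp_pos).
    nra. }
  assert (Hdf : 1 <= (3 + E) * df c).
  { unfold df. fold w. apply Rmult_le_reg_r with ((1+w)^2). nra.
    field_simplify. 2: nra. lra. }
  assert (Hdf0 : 0 < df c) by (unfold df; fold w; apply Rdiv_lt_0_compat; nra).
  replace (sigma a - sigma b) with (- (sigma b - sigma a)) by ring.
  rewrite Rabs_Ropp, Heq, Rabs_mult, (Rabs_right (df c)) by lra.
  rewrite <- Rabs_Ropp. replace (- (a - b)) with (b - a) by ring.
  pose proof (Rabs_pos (b - a)). nra.
Qed.

Lemma sigma_bounds t : 0 < sigma t < 1.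
Proof. unfold sigma. pose proof (exp_pos (-t)). split.
- apply Rdiv_lt_0_compat; lra.
- apply Rmult_lt_reg_r with (1 + exp (-t)); [lra|]. field_simplify; lra. Qed.

Lemma hell_bound (p q : R) : 0 <= p <= 1 -> 0 <= q <= 1 ->
  (p - q)^2 / 2 <= hellinger2 (fun b => if b then p else 1 - p) (fun b => if b then q else 1 - q).
Proof.
intros Hp Hq. unfold hellinger2.
pose proof (alg (sqrt p) (sqrt q) (sqrt (1-p)) (sqrt (1-q))) as H.
rewrite !sqrt_sqrt in H by lra.
assert (Hh := H (sqrt_pos _) (sqrt_pos _) (sqrt_pos _) (sqrt_pos _) ltac:(lra) ltac:(lra)).
lra.
Qed.

Theorem lemma4 (X Y : Type) (C : R) (r1 r2 : X -> Y -> R)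
  (h1 : forall x y, Rabs (r1 x y) <= C)
  (h2 : forall x y, Rabs (r2 x y) <= C)
  (x : X) (y1 y2 : Y) :
  (delta r1 r2 x y1 y2) ^ 2
  <= 2 * (3 + exp (2 * C)) ^ 2
       * hellinger2 (bt_dist r1 x y1 y2) (bt_dist r2 x y1 y2).
Proof.
set (a := r1 x y1 - r1 x y2). set (b := r2 x y1 - r2 x y2).
assert (HC : 0 <= C) by (pose proof (h1 x y1); pose proof (Rabs_pos (r1 x y1)); lra).
assert (Ha : Rabs a <= 2 * C).
{ unfold a. pose proof (Rabs_triang (r1 x y1) (- r1 x y2)). rewrite Rabs_Ropp in H.
  pose proof (h1 x y1); pose proof (h1 x y2). unfold Rminus. lra. }
assert (Hb : Rabs b <= 2 * C).
{ unfold b. pose proof (Rabs_triang (r2 x y1) (- r2 x y2)). rewrite Rabs_Ropp in H.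
  pose proof (h2 x y1); pose proof (h2 x y2). unfold Rminus. lra. }
pose proof (sigma_mvt (2*C) a b ltac:(lra) Ha Hb) as Hm.
pose proof (sigma_bounds a). pose proof (sigma_bounds b).
pose proof (hell_bound (sigma a) (sigma b) ltac:(lra) ltac:(lra)) as Hh.
unfold bt_dist. fold a b.
replace (delta r1 r2 x y1 y2) with (a - b) by (unfold delta, a, b; ring).
set (K := 3 + exp (2*C)) in *.
assert (HK : 0 <= K) by (unfold K; pose proof (exp_pos (2*C)); lra).
assert (Hsq : (a - b)^2 <= K^2 * (sigma a - sigma b)^2).
{ rewrite <- (pow2_abs (a-b)), <- (pow2_abs (sigma a - sigma b)).
  pose proof (Rabs_pos (a-b)). pose proof (Rabs_pos (sigma a - sigma b)).
  replace (K^2 * Rabs (sigma a - sigma b)^2) with ((K * Rabs (sigma a - sigma b))^2) by ring.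
  apply pow_incr; lra. }
assert (0 <= K^2) by (apply pow2_ge_0).
nra.
Qed.
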